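(* Let $S\subset\mathcal P$ be finite and let $\Delta$ be a bounded region of $\mathcal L_S$ with $n$ sides, with $P_k$, $D_k$ ($k\in\mathbb{Z}/n\mathbb{Z}$) as in the context. Fix $k$. Let $M$ be the line in $\mathcal P$ through $P_k$ parallel to $\overleftrightarrow{OP_{k+1}}$ (it does not pass through $O$), and for $P\in M$ let $m(P)=\overleftrightarrow{PP_{k+1}}$. Starting from $P=P_k$, move $P$ along $M$ to the right if $D_{k+1}=r$ and to the left if $D_{k+1}=l$, and let $P^*$ be the first position at which $m(P)$ contains a point of $S$ not lying on $\overleftrightarrow{P_kP_{k+1}}$. Let $Q_0=P_{k+1},Q_1,\dots,Q_q$ be the points of $m(P^* )\cap S$, indexed in the order in which they are met when starting at $Q_0$ and moving along $m(P^* )$ in the direction away from $P^*$, wrapping around through infinity to the opposite end of $m(P^* )$ if necessary. Then $P_{k+2}=Q_q$ if $D_k=D_{k+1}$, and $P_{k+2}=Q_1$ if $D_k\neq D_{k+1}$.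
   Context: $\mathcal P=\mathbb{R}^2\setminus\{(0,0)\}$ is the coefficient plane, with origin denoted $O$ (also $O$ denotes the origin of $\mathbb{R}^2$); for $P=(A,B)\in\mathcal P$, $L_P$ is the line $Ax+By=1$ in $\mathbb{R}^2$; $\mathcal L_S=\{L_P\mid P\in S\}$. For $P=(A,B),Q=(A',B')$, $Q$ is to the left of $P$ if $AB'-BA'>0$ and to the right if $AB'-BA'<0$. Moving ''to the right'' (resp. ''left'') along a line not through $O$ means moving in the direction of points that are to the right (resp. left) of the current point. For finite $S$, regions of $\mathcal L_S$ are the closures of the connected components of $\mathbb{R}^2\setminus\bigcup_{P\in S}L_P$. For a bounded region $\Delta$ with $n$ sides, $L_k$ ($k\in\mathbb{Z}/n\mathbb{Z}$) are the lines containing the sides of $\Delta$ in clockwise order around $\Delta$, $P_k\in S$ is the point with $L_{P_k}=L_k$, and $D_k\in\{l,r\}$ is the side of $L_k$ on which the origin of $\mathbb{R}^2$ lies for a traveller moving along the side of $\Delta$ on $L_k$ clockwise around $\Delta$ (with $\Delta$ on the traveller's right). *)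

(* Defs.v *)
(* Points of R^2 and of the
   coefficient plane are pairs [R * R] over an abstract [R : realType];
   [R * R] carries the product topology of MathComp-Analysis. *)
From HB Require Import structures.
From mathcomp Require Import all_boot all_order all_algebra.
From mathcomp Require Import all_classical all_reals topology normedtype.
Import numFieldNormedType.Exports.
Set Implicit Arguments. Unset Strict Implicit. Unset Printing Implicit Defensive.
Import Order.TTheory GRing.Theory Num.Theory.
Local Open Scope ring_scope.
Local Open Scope classical_set_scope.

Section Defs.
Variable R : realType.
Notation pt := (R * R)%type.

Definition padd (p q : pt) : pt := (p.1 + q.1, p.2 + q.2).
Definition psub (p q : pt) : pt := (p.1 - q.1, p.2 - q.2).
Definition pscale (t : R) (p : pt) : pt := (t * p.1, t * p.2).
Definition origin : pt := (0, 0).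

Definition cross (p q : pt) : R := p.1 * q.2 - p.2 * q.1.

Definition left_of (P Q : pt) : Prop := 0 < cross P Q.
Definition right_of (P Q : pt) : Prop := cross P Q < 0.

Definition lineL (P : pt) : set pt := [set x | P.1 * x.1 + P.2 * x.2 = 1].

Definition arr_union (S : seq pt) : set pt :=
  [set x | exists2 P, P \in S & lineL P x].

Definition is_region (S : seq pt) (D : set pt) : Prop :=
  exists2 x, ~ arr_union S x &
    D = closure (connected_component (~` arr_union S) x).

Definition bounded_pts (D : set pt) : Prop :=
  exists M : R, forall x, D x -> `|x.1| <= M /\ `|x.2| <= M.

Definition segment (a b : pt) : set pt :=
  [set x | exists2 t : R, 0 <= t <= 1 & x = padd a (pscale t (psub b a))].

Definition line_through (X Y : pt) : set pt :=
  [set Z | cross (psub Y X) (psub Z X) = 0].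

(* [sides_cw S D n P a b] : the bounded region D of L_S has exactly the n
   sides D /\ L_{P k} = [a k, b k] (k : 'I_n, read cyclically), P k \in S,
   listed in clockwise order: side k runs from a k to b k, its end b k is
   the start of side k+1, and D lies on the right of a traveller going from
   a k to b k. *)
Definition sides_cw (S : seq pt) (D : set pt) (n : nat)
    (P a b : 'I_n -> pt) : Prop :=
  [/\ (forall k, P k \in S) /\ injective P,
      forall k, a k <> b k /\ D `&` lineL (P k) = segment (a k) (b k),
      forall k, b k = a (ordS k),
      forall k x, D x -> cross (psub (b k) (a k)) (psub x (a k)) <= 0 &
      forall Q, Q \in S ->
        (exists x y, [/\ x <> y, (D `&` lineL Q) x & (D `&` lineL Q) y]) ->
        exists k, Q = P k].

(* D_k = r : the origin is on the right of the traveller going from a to b *)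
Definition origin_right (a b : pt) : bool :=
  cross (psub b a) (psub origin a) < 0.

(* Order in which the points X + u w (u <> 0) of the line through X with
   direction w are met when starting at X, moving in direction w and
   wrapping through infinity: first u > 0 increasing, then u < 0
   increasing.  [met_before u1 u2] : parameter u1 is met strictly before u2. *)
Definition met_before (u1 u2 : R) : bool :=
  ((0 < u1) && ((u2 < 0) || (u1 < u2))) ||
  [&& u1 < 0, u2 < 0 & u1 < u2].

Definition on_line_param (S : seq pt) (X w : pt) (Q : pt) (u : R) : Prop :=
  [/\ Q \in S, u != 0 & Q = padd X (pscale u w)].

Definition first_met (S : seq pt) (X w Q : pt) : Prop :=
  exists u, on_line_param S X w Q u /\
    forall Q' u', on_line_param S X w Q' u' -> u' = u \/ met_before u u'.

Definition last_met (S : seq pt) (X w Q : pt) : Prop :=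
  exists u, on_line_param S X w Q u /\
    forall Q' u', on_line_param S X w Q' u' -> u' = u \/ met_before u' u.

End Defs.

(* Main.v *)
Require Import Defs.
From HB Require Import structures.
From mathcomp Require Import all_boot all_order all_algebra.
From mathcomp Require Import all_classical all_reals topology normedtype.
From mathcomp Require Import ring lra.
Import numFieldNormedType.Exports.
Import Order.TTheory GRing.Theory Num.Theory.
Local Open Scope ring_scope.
Local Open Scope classical_set_scope.
Set Implicit Arguments. Unset Strict Implicit.
Section S.
Variable R : realType.
Notation pt := (R * R)%type.
Definition dot (p x : pt) := p.1 * x.1 + p.2 * x.2.

Lemma peq (x y : pt) : x.1 = y.1 -> x.2 = y.2 -> x = y.
Proof. by case: x; case: y => /= ? ? ? ? -> ->. Qed.

Lemma nz_pt (x : pt) : x <> 0 :> pt -> x.1 != 0 \/ x.2 != 0.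
Proof.
move=> h; case: (eqVneq x.1 0) => h1; last by left.
case: (eqVneq x.2 0) => h2; last by right.
by exfalso; apply: h; apply: peq.
Qed.

Lemma par_perp (a b x : pt) : cross a b = 0 -> dot a x = 0 -> a <> 0 :> pt -> dot b x = 0.
Proof.
rewrite /cross /dot => c ax /nz_pt [] h.
- have : (b.1 * x.1 + b.2 * x.2) * a.1 = b.1 * (a.1 * x.1 + a.2 * x.2) + x.2 * (a.1 * b.2 - a.2 * b.1) by ring.
  by rewrite ax c !mulr0 addr0 => /eqP; rewrite mulf_eq0 (negbTE h) orbF => /eqP.
- have : (b.1 * x.1 + b.2 * x.2) * a.2 = b.2 * (a.1 * x.1 + a.2 * x.2) - x.1 * (a.1 * b.2 - a.2 * b.1) by ring.
  by rewrite ax c !mulr0 subr0 => /eqP; rewrite mulf_eq0 (negbTE h) orbF => /eqP.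
Qed.

Lemma perp_par (a b V : pt) : dot a V = 0 -> dot b V = 0 -> V <> 0 :> pt -> cross a b = 0.
Proof.
rewrite /cross /dot => aV bV /nz_pt [] h.
- have : (a.1 * b.2 - a.2 * b.1) * V.1 = b.2 * (a.1 * V.1 + a.2 * V.2) - a.2 * (b.1 * V.1 + b.2 * V.2) by ring.
  by rewrite aV bV !mulr0 subr0 => /eqP; rewrite mulf_eq0 (negbTE h) orbF => /eqP.
- have : (a.1 * b.2 - a.2 * b.1) * V.2 = a.1 * (b.1 * V.1 + b.2 * V.2) - b.1 * (a.1 * V.1 + a.2 * V.2) by ring.
  by rewrite aV bV !mulr0 subr0 => /eqP; rewrite mulf_eq0 (negbTE h) orbF => /eqP.
Qed.

Lemma dot_one_nz (u x : pt) : dot u x = 1 -> x <> 0 :> pt.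
Proof. by move=> h e; move: h; rewrite e /dot /= !mulr0 addr0 => /eqP; rewrite eq_sym oner_eq0. Qed.

Lemma uniq_dual (u u' x y : pt) : dot u x = 1 -> dot u y = 1 -> dot u' x = 1 -> dot u' y = 1 ->
  x <> y -> u = u'.
Proof.
move=> ux uy u'x u'y nxy; apply/eqP; apply/negPn/negP => /eqP nu.
have z0 : psub u u' <> 0 :> pt.
  move=> e; apply: nu; apply: peq.
    by move: (congr1 fst e) => /= /eqP; rewrite subr_eq0 => /eqP.
  by move: (congr1 snd e) => /= /eqP; rewrite subr_eq0 => /eqP.
have hx : dot x (psub u u') = 0 by move: ux u'x; rewrite /dot /= => a b; lra.
have hy : dot y (psub u u') = 0 by move: uy u'y; rewrite /dot /= => a b; lra.
have := perp_par hx hy z0; rewrite /cross => c.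
apply: nxy; apply: peq.
- have : y.1 - x.1 = y.1 * dot u x - x.1 * dot u y by rewrite ux uy !mulr1.
  rewrite /dot => e; apply/eqP; rewrite eq_sym -subr_eq0; apply/eqP; rewrite e.
  have -> : y.1 * (u.1 * x.1 + u.2 * x.2) - x.1 * (u.1 * y.1 + u.2 * y.2) = - u.2 * (x.1 * y.2 - x.2 * y.1) by ring.
  by rewrite c mulr0.
- have : y.2 - x.2 = y.2 * dot u x - x.2 * dot u y by rewrite ux uy !mulr1.
  rewrite /dot => e; apply/eqP; rewrite eq_sym -subr_eq0; apply/eqP; rewrite e.
  have -> : y.2 * (u.1 * x.1 + u.2 * x.2) - x.2 * (u.1 * y.1 + u.2 * y.2) = u.1 * (x.1 * y.2 - x.2 * y.1) by ring.
  by rewrite c mulr0.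
Qed.

Lemma par_scale (w z : pt) : cross w z = 0 -> w <> 0 :> pt -> exists u, z = pscale u w.
Proof.
rewrite /cross => c /nz_pt [] h.
- exists (z.1 / w.1); apply: peq => /=; first by rewrite mulfVK.
  apply: (mulIf h).
  have -> : z.1 / w.1 * w.2 * w.1 = z.1 * w.2 * (w.1 / w.1) by ring.
  rewrite divff // mulr1; lra.
- exists (z.2 / w.2); apply: peq => /=; last by rewrite mulfVK.
  apply: (mulIf h).
  have -> : z.2 / w.2 * w.1 * w.2 = z.2 * w.1 * (w.2 / w.2) by ring.
  rewrite divff // mulr1; lra.
Qed.

Lemma lid (p d y : pt) : cross d y * dot p p + cross p d * dot p y = dot p d * cross p y.
Proof. rewrite /cross /dot; ring. Qed.

Lemma lid2 (p q d : pt) : dot q d * dot p p - cross p d * cross p q = dot p d * dot p q.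
Proof. rewrite /cross /dot; ring. Qed.

Lemma dotpp_gt0 (p x : pt) : dot p x = 1 -> 0 < dot p p.
Proof.
move=> h; have /nz_pt [] : p <> 0 :> pt.
  by move=> e; move: h; rewrite e /dot /= !mul0r addr0 => /eqP; rewrite eq_sym oner_eq0.
all: rewrite /dot => hp.
- have : 0 < p.1 * p.1 by rewrite lt_def mulf_neq0 //= -expr2 sqr_ge0.
  have : 0 <= p.2 * p.2 by rewrite -expr2 sqr_ge0.
  lra.
- have : 0 < p.2 * p.2 by rewrite lt_def mulf_neq0 //= -expr2 sqr_ge0.
  have : 0 <= p.1 * p.1 by rewrite -expr2 sqr_ge0.
  lra.
Qed.
Definition ff (Q z : R * R) := Q.1 * z.1 + Q.2 * z.2 - 1.
Lemma fcont (Q : R * R) : continuous (ff Q).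
Proof.
move=> x.
apply: cvgB; last exact: cvg_cst.
apply: cvgD; apply: cvgM; (try exact: cvg_cst).
exact: cvg_fst. exact: cvg_snd.
Qed.

Lemma side_aux (S : seq (R*R)) D Q y1 y2 : is_region S D -> Q \in S -> D y1 -> D y2 ->
  0 < ff Q y1 -> ff Q y2 < 0 -> False.
Proof.
move=> [x0 _ ->] QS Dy1 Dy2 p1 p2.
set C := connected_component _ x0 in Dy1 Dy2.
have get : forall y (E : set R), closure C y -> open E -> E (ff Q y) -> exists c, C c /\ E (ff Q c).
  move=> y E cy oE Ey.
  have : nbhs y (ff Q @^-1` E).
    by apply: (@fcont Q y); apply: open_nbhs_nbhs; split.
  by move=> /cy [c [Cc Ec]]; exists c.
have [c1 [C1 f1]] := get _ _ Dy1 (@open_gt _ 0) p1.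
have [c2 [C2 f2]] := get _ _ Dy2 (@open_lt _ 0) p2.
have cC : connected (ff Q @` C).
  apply: connected_continuous_connected; first exact: component_connected.
  by apply: continuous_subspaceT => z; exact: (@fcont Q).
have /connected_intervalP iC := cC.
have : (ff Q @` C) 0.
  apply: (iC (ff Q c2) (ff Q c1)); [by exists c2|by exists c1|].
  by rewrite /= (ltW f1) (ltW f2).
move=> [c Cc fc0].
have := connected_component_sub Cc; apply; exists Q => //.
by rewrite /lineL /=; move: fc0; rewrite /ff => /eqP; rewrite subr_eq0 => /eqP.
Qed.

Lemma zero_vec (p d : pt) : dot p d = 0 -> cross p d = 0 -> 0 < dot p p -> d = 0.
Proof.
rewrite /dot /cross => h1 h2 h3.
have e1 : d.1 * (p.1 * p.1 + p.2 * p.2) = p.1 * (p.1 * d.1 + p.2 * d.2) - p.2 * (p.1 * d.2 - p.2 * d.1) by ring.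
have e2 : d.2 * (p.1 * p.1 + p.2 * p.2) = p.2 * (p.1 * d.1 + p.2 * d.2) + p.1 * (p.1 * d.2 - p.2 * d.1) by ring.
rewrite h1 h2 !mulr0 subr0 in e1; rewrite h1 h2 !mulr0 addr0 in e2.
apply: peq => /=.
  by move/eqP: e1; rewrite mulf_eq0 (gt_eqF h3) orbF => /eqP.
by move/eqP: e2; rewrite mulf_eq0 (gt_eqF h3) orbF => /eqP.
Qed.

Lemma mb1 (u1 u2 : R) : 0 < u1 -> u2 < 0 -> met_before u1 u2.
Proof. by move=> h1 h2; rewrite /met_before h1 h2. Qed.
Lemma mb2 (u1 u2 : R) : 0 < u1 -> u1 < u2 -> met_before u1 u2.
Proof. by move=> h1 h2; rewrite /met_before h1 h2 orbT. Qed.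
Lemma mb3 (u1 u2 : R) : u1 < 0 -> u2 < 0 -> u1 < u2 -> met_before u1 u2.
Proof. by move=> h1 h2 h3; rewrite /met_before h1 h2 h3 /= orbT. Qed.

Lemma last_case (g u2 u : R) : 0 < g * u2 -> g * u * (u - u2) < 0 -> met_before u u2.
Proof.
move=> h1 h2; case: (ltrgt0P u2) => hu2.
- have hg : 0 < g by nra.
  have hu : u * (u - u2) < 0 by nra.
  apply: mb2; nra.
- have hg : g < 0 by nra.
  have hu : 0 < u * (u - u2) by nra.
  case: (ltrgt0P u) => hu'.
  + exact: mb1.
  + apply: mb3 => //; nra.
  + by move: hu; rewrite hu' mul0r ltxx.
- by move: h1; rewrite hu2 mulr0 ltxx.
Qed.

Lemma first_case (g u2 u : R) : g * u2 < 0 -> g * u * (u - u2) < 0 -> met_before u2 u.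
Proof.
move=> h1 h2; case: (ltrgt0P u2) => hu2.
- have hg : g < 0 by nra.
  have hu : 0 < u * (u - u2) by nra.
  case: (ltrgt0P u) => hu'.
  + apply: mb2 => //; nra.
  + exact: mb1.
  + by move: hu; rewrite hu' mul0r ltxx.
- have hg : 0 < g by nra.
  have hu : u * (u - u2) < 0 by nra.
  apply: mb3 => //; nra.
- by move: h1; rewrite hu2 mulr0 ltxx.
Qed.
Lemma dot_sub (u v x : pt) : dot (psub u v) x = dot u x - dot v x.
Proof. rewrite /dot /=; ring. Qed.
Lemma dot_subr (u v x : pt) : dot x (psub u v) = dot x u - dot x v.
Proof. rewrite /dot /=; ring. Qed.

Ltac fin x0 y0 hx hy := first [by rewrite mulr_gt0 | by rewrite nmulr_lgt0 | by rewrite pmulr_llt0 | by rewrite nmulr_llt0 | by move: x0; rewrite -hx eqxx | by move: x0; rewrite hx eqxx | by move: y0; rewrite -hy eqxx| by move: y0; rewrite hy eqxx].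
Lemma sgn_eq (x y : R) : x != 0 -> y != 0 -> ((x < 0) == (y < 0)) -> 0 < x * y.
Proof.
move=> x0 y0; case: (ltrgt0P x) => hx; case: (ltrgt0P y) => hy //=; move=> _; fin x0 y0 hx hy.
Qed.
Lemma sgn_neq (x y : R) : x != 0 -> y != 0 -> ((x < 0) == (y < 0)) = false -> x * y < 0.
Proof.
move=> x0 y0; case: (ltrgt0P x) => hx; case: (ltrgt0P y) => hy //=; move=> _; fin x0 y0 hx hy.
Qed.
End S.

Theorem theorem3p13 (R : realType) (S : seq (R * R)%type) (D : set (R * R)%type)
  (n : nat) (P a b : 'I_n -> (R * R)%type) (k : 'I_n)
  (v : (R * R)%type) (tstar : R) :
  origin R \notin S ->
  is_region S D -> bounded_pts D ->
  sides_cw S D P a b ->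
  let k1 := ordS k in
  let k2 := ordS k1 in
  let Dk := origin_right (a k) (b k) in
  let Dk1 := origin_right (a k1) (b k1) in
  (v = P k1 \/ v = pscale (-1) (P k1)) ->
  let pos := fun t : R => padd (P k) (pscale t v) in
  (forall t t' : R, 0 <= t -> t < t' ->
     if Dk1 then right_of (pos t) (pos t') else left_of (pos t) (pos t')) ->
  let hit := fun t : R => exists2 Q, Q \in S &
      line_through (pos t) (P k1) Q /\ ~ line_through (P k) (P k1) Q in
  0 <= tstar -> hit tstar -> (forall t, 0 <= t -> t < tstar -> ~ hit t) ->
  let w := psub (P k1) (pos tstar) in
  (if Dk == Dk1 then last_met S (P k1) w (P k2)
   else first_met S (P k1) w (P k2)).
Proof.
move=> _ reg _ [[PS Pinj] segs bnext rights cover] k1 k2 Dk Dk1 hv pos dir hit ts0 hts nohit w.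
have segD : forall j, D (a j) /\ dot (P j) (a j) = 1 /\ D (b j) /\ dot (P j) (b j) = 1.
  move=> j; have [_ e] := segs j.
  have ha : segment (a j) (b j) (a j).
    by exists 0; [rewrite lexx ler01 | apply: peq => /=; ring].
  have hb : segment (a j) (b j) (b j).
    by exists 1; [rewrite lexx ler01 | apply: peq => /=; ring].
  by rewrite -e in ha hb; case: ha hb => Da La [Db Lb].
have [Dak [Lak [Dbk Lbk]]] := segD k.
have [Dak1 [Lak1 [Dbk1 Lbk1]]] := segD k1.
have [Dak2 [Lak2 [Dbk2 Lbk2]]] := segD k2.
have e1 : a k1 = b k := esym (bnext k).
have e2 : a k2 = b k1 := esym (bnext k1).
rewrite e1 in Lak1; rewrite e2 in Lak2.
have kk1 : k1 <> k by move=> e; have [h _] := segs k; apply: h; rewrite (bnext k) -/k1 e.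
have k1k2 : k2 <> k1 by move=> e; have [h _] := segs k1; apply: h; rewrite (bnext k1) -/k2 e.
have hpq : P k <> P k1 by move=> /Pinj e; apply: kk1.
have hqr : P k1 <> P k2 by move=> /Pinj e; apply: k1k2.
have hAX0 : a k <> b k by have [h _] := segs k.
have hX0V : b k <> b k1 by have [h _] := segs k1; rewrite -e1.
have hVX2 : b k1 <> b k2 by have [h _] := segs k2; rewrite -e2.

have pp_gt0 : 0 < dot (P k) (P k) := dotpp_gt0 Lak.
have qq_gt0 : 0 < dot (P k1) (P k1) := dotpp_gt0 Lbk1.
have sub0 : forall x y : R * R, psub x y = 0 -> x = y.
  move=> x y e; apply: peq.
    by move: (congr1 fst e) => /= /eqP; rewrite subr_eq0 => /eqP.
  by move: (congr1 snd e) => /= /eqP; rewrite subr_eq0 => /eqP.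
have dorig : forall u, dot u (origin R) = 0 by move=> u; rewrite /dot /= !mulr0 addr0.
set dk := psub (b k) (a k).
have pdk : dot (P k) dk = 0 by rewrite /dk dot_subr Lbk Lak subrr.
set sk := cross (P k) dk.
have sk0 : sk != 0.
  by apply/eqP => h; apply: hAX0; apply/esym/sub0; exact: zero_vec pdk h pp_gt0.
have hDk : Dk = (sk < 0).
  have := lid (P k) dk (psub (origin R) (a k)).
  rewrite pdk mul0r dot_subr Lak dorig -/sk => E.
  have E' : cross dk (psub (origin R) (a k)) * dot (P k) (P k) = sk by lra.
  by rewrite /Dk /origin_right -/dk -E' pmulr_llt0.
set dk1 := psub (b k1) (b k).
have qdk1 : dot (P k1) dk1 = 0 by rewrite /dk1 dot_subr Lbk1 Lak1 subrr.
set sk1 := cross (P k1) dk1.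
have sk10 : sk1 != 0.
  by apply/eqP => h; apply: hX0V; apply/esym/sub0; exact: zero_vec qdk1 h qq_gt0.
have hDk1 : Dk1 = (sk1 < 0).
  have := lid (P k1) dk1 (psub (origin R) (b k)).
  rewrite qdk1 mul0r dot_subr Lak1 dorig -/sk1 => E.
  have E' : cross dk1 (psub (origin R) (b k)) * dot (P k1) (P k1) = sk1 by lra.
  by rewrite /Dk1 /origin_right e1 -/dk1 -E' pmulr_llt0.
have pV1 : dot (P k) (b k1) != 1.
  by apply/eqP => h; apply: hpq; exact: uniq_dual Lbk h Lak1 Lbk1 hX0V.
have qX21 : dot (P k1) (b k2) != 1.
  by apply/eqP => h; apply: hqr; exact: uniq_dual Lbk1 h Lak2 Lbk2 hVX2.
have F3 : 0 < sk * (dot (P k) (b k1) - 1).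
  have R1 := rights k (b k1) Dbk1.
  have := lid (P k) dk (psub (b k1) (a k)).
  rewrite pdk mul0r dot_subr Lak -/dk -/sk => E.
  have ne : sk * (dot (P k) (b k1) - 1) != 0 by rewrite mulf_neq0 // subr_eq0.
  rewrite lt_def ne /=; nra.
have F4 : 0 < sk1 * (dot (P k1) (b k2) - 1).
  have R1 := rights k1 (b k2) Dbk2.
  rewrite e1 -/dk1 in R1.
  have := lid (P k1) dk1 (psub (b k2) (b k)).
  rewrite qdk1 mul0r dot_subr Lak1 -/sk1 => E.
  have ne : sk1 * (dot (P k1) (b k2) - 1) != 0 by rewrite mulf_neq0 // subr_eq0.
  rewrite lt_def ne /=; nra.
set c := cross (P k) (P k1).
have F5 : sk * sk1 * c < 0.
  set X := cross dk dk1.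
  have E1 : X * dot (P k) (P k) = - (sk * (dot (P k) (b k1) - 1)).
    have := lid (P k) dk (psub (b k1) (a k)).
    rewrite pdk mul0r dot_subr Lak -/sk => E.
    have -> : X = cross dk (psub (b k1) (a k)) by rewrite /X /dk /dk1 /cross /=; ring.
    lra.
  have E2 : X * dot (P k1) (P k1) = sk1 * dot (P k1) dk.
    have := lid (P k1) dk1 dk.
    rewrite qdk1 mul0r -/sk1 => E.
    have -> : X = - cross dk1 dk by rewrite /X /cross; ring.
    lra.
  have E3 : dot (P k1) dk * dot (P k) (P k) = sk * c.
    have := lid2 (P k) (P k1) dk.
    rewrite pdk mul0r -/sk -/c => E; lra.
  have Xn : X < 0 by nra.
  have -> : sk * sk1 * c = X * dot (P k1) (P k1) * dot (P k) (P k).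
    by rewrite E2 -[RHS]mulrA E3; ring.
  by rewrite pmulr_llt0 // pmulr_llt0.

have [eps [ev epsc]] : exists eps, v = pscale eps (P k1) /\ (eps = 1 \/ eps = -1).
  case: hv => ->.
    by exists 1; split; [apply: peq => /=; ring | left].
  by exists (-1); split => //; right.
have eps2 : eps * eps = 1 by case: epsc => ->; rewrite ?mulr1 ?mulrNN ?mulr1.
have posE : forall t, pos t = padd (P k) (pscale (t * eps) (P k1)).
  by move=> t; rewrite /pos ev; apply: peq => /=; ring.
have dotpos : forall t x, dot (pos t) x = dot (P k) x + t * eps * dot (P k1) x.
  by move=> t x; rewrite posE /dot /=; ring.
have F6 : 0 < eps * c * sk1.
  have := dir 0 1 (lexx 0) ltr01.
  have cr : cross (pos 0) (pos 1) = eps * c by rewrite !posE /c /cross /=; ring.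
  rewrite /right_of /left_of cr hDk1.
  case: (ltrP sk1 0) => h1 h2; first by nra.
  have : 0 < sk1 by rewrite lt_def sk10 h1.
  nra.
have F7 : eps * sk < 0.
  by move: F6; case: epsc => -> F6; nra.
set tV := eps * (1 - dot (P k) (b k1)).
have tV0 : 0 < tV by move: F7; rewrite /tV; case: epsc => -> F7; nra.
have c0 : c != 0 by apply/eqP => h; move: F5; rewrite h mulr0 ltxx.
have posq : forall t, pos t <> P k1.
  move=> t e; move/eqP: c0; apply.
  have h1 : (P k).1 = (P k1).1 - t * eps * (P k1).1.
    by move: (congr1 fst e); rewrite posE /= => h; lra.
  have h2 : (P k).2 = (P k1).2 - t * eps * (P k1).2.
    by move: (congr1 snd e); rewrite posE /= => h; lra.
  by rewrite /c /cross h1 h2; ring.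
have PsV : dot (pos tV) (b k1) = 1.
  rewrite dotpos Lbk1 mulr1 /tV.
  have -> : eps * (1 - dot (P k) (b k1)) * eps = (eps * eps) * (1 - dot (P k) (b k1)) by ring.
  rewrite eps2; ring.
have V0 : b k1 <> 0 := dot_one_nz Lbk1.
have X00 : b k <> 0 := dot_one_nz Lbk.
have qp0 : psub (P k1) (P k) <> 0 by move/sub0 => e; apply: hpq; rewrite e.
have hitV : hit tV.
  exists (P k2); first exact: PS.
  split.
  - rewrite /line_through; apply: (perp_par _ _ V0).
      by rewrite dot_sub Lbk1 PsV subrr.
    by rewrite dot_sub Lak2 PsV subrr.
  - move=> h.
    have ax : dot (psub (P k1) (P k)) (b k) = 0 by rewrite dot_sub Lak1 Lbk subrr.
    have := par_perp h ax qp0; rewrite dot_sub Lbk => h'.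
    have rX0 : dot (P k2) (b k) = 1 by lra.
    by apply: hqr; exact: uniq_dual Lak1 Lbk1 rX0 Lak2 hX0V.
have nohitV : forall t, 0 <= t -> t < tV -> ~ hit t.
  move=> t t0 ttV [Q QS [lQ nlQ]].
  set s := t / tV.
  have ts : t = s * tV by rewrite /s divfK // gt_eqF.
  have s0 : 0 <= s by rewrite /s divr_ge0 // ltW.
  have s1 : s < 1 by rewrite /s ltr_pdivrMr // mul1r.
  set x := padd (b k) (pscale s (psub (b k1) (b k))).
  have dx : forall u, dot u x = (1 - s) * dot u (b k) + s * dot u (b k1).
    by move=> u; rewrite /x /dot /=; ring.
  have qx : dot (P k1) x = 1 by rewrite dx Lak1 Lbk1; ring.
  have px : dot (pos t) x = 1.
    rewrite dotpos qx dx Lbk mulr1 ts /tV.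
    have -> : s * (eps * (1 - dot (P k) (b k1))) * eps = s * (eps * eps) * (1 - dot (P k) (b k1)) by ring.
    rewrite eps2; ring.
  have Qx : dot Q x = 1.
    have a0 : psub (P k1) (pos t) <> 0 by move/sub0 => e; apply: (posq t); rewrite e.
    have ax : dot (psub (P k1) (pos t)) x = 0 by rewrite dot_sub qx px subrr.
    have := par_perp lQ ax a0.
    by rewrite dot_sub px => h; lra.
  set f0 := dot Q (b k) - 1.
  set f1 := dot Q (b k1) - 1.
  have fe : (1 - s) * f0 + s * f1 = 0.
    have -> : (1 - s) * f0 + s * f1 = ((1 - s) * dot Q (b k) + s * dot Q (b k1)) - 1.
      by rewrite /f0 /f1; ring.
    by rewrite -dx Qx subrr.
  have f00 : f0 != 0.
    apply/eqP => h; apply: nlQ; rewrite /line_through; apply: (perp_par _ _ X00).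
      by rewrite dot_sub Lak1 Lbk subrr.
    have hQ : dot Q (b k) = 1 by move: h; rewrite /f0 => h; lra.
    by rewrite dot_sub hQ Lbk subrr.
  have side1 : ~ (0 < f0 /\ f1 < 0).
    by move=> [h1 h2]; exact: (side_aux reg QS Dbk Dbk1 h1 h2).
  have side2 : ~ (0 < f1 /\ f0 < 0).
    by move=> [h1 h2]; exact: (side_aux reg QS Dbk1 Dbk h1 h2).
  case: (ltrgt0P f0) => h0.
  - have : 0 <= f1 by rewrite leNgt; apply/negP => h; apply: side1.
    nra.
  - have : f1 <= 0 by rewrite leNgt; apply/negP => h; apply: side2.
    nra.
  - by move: f00; rewrite h0 eqxx.
have tsV : tstar = tV.
  apply/eqP; rewrite eq_le; apply/andP; split; rewrite leNgt; apply/negP => h.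
  - exact: nohit tV (ltW tV0) h hitV.
  - exact: nohitV tstar ts0 h hts.

rewrite /w tsV.
set Ps := pos tV.
set W := psub (P k1) Ps.
have W0 : W <> 0 by move/sub0 => e; apply: (posq tV); rewrite -/Ps -e.
have WV : dot W (b k1) = 0 by rewrite /W dot_sub Lbk1 PsV subrr.
have rqV : dot (psub (P k2) (P k1)) (b k1) = 0 by rewrite dot_sub Lak2 Lbk1 subrr.
have [u2 hu2] := par_scale (perp_par WV rqV V0) W0.
have rE : P k2 = padd (P k1) (pscale u2 W).
  apply: peq => /=.
    by move: (congr1 fst hu2) => /= h; lra.
  by move: (congr1 snd hu2) => /= h; lra.
have u20 : u2 != 0.
  by apply/eqP => h; apply: hqr; rewrite rE h; apply: peq => /=; rewrite mul0r addr0.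
have dotl : forall u x, dot (padd (P k1) (pscale u W)) x = dot (P k1) x + u * dot W x.
  by move=> u x; rewrite /dot /=; ring.
have alpha : dot W (b k) = - (tV * eps).
  rewrite /W dot_sub Lak1 /Ps dotpos Lbk Lak1; ring.
set beta := dot (P k1) (b k2) - 1.
set gamma := dot W (b k2).
have bg : beta + u2 * gamma = 0.
  by move: Lbk2; rewrite rE dotl /beta /gamma => h; lra.
have g0 : gamma != 0.
  apply/eqP => h; move: F4; rewrite -/beta.
  have -> : beta = 0 by move: bg; rewrite h mulr0 addr0.
  by rewrite mulr0 ltxx.
have claim : forall Q u, on_line_param S (P k1) W Q u -> u = u2 \/ eps * gamma * u * (u - u2) < 0.
  move=> Q u [QS u0 eQ].
  case: (eqVneq u u2) => hu; first by left.
  right.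
  set F0 := u * - (tV * eps).
  set F2 := gamma * (u - u2).
  have f0E : dot Q (b k) - 1 = F0 by rewrite eQ dotl alpha Lak1 /F0; ring.
  have f2E : dot Q (b k2) - 1 = F2.
    rewrite eQ dotl -/gamma /F2.
    have -> : dot (P k1) (b k2) = beta + 1 by rewrite /beta; ring.
    have -> : beta = - (u2 * gamma) by lra.
    ring.
  have side1 : ~ (0 < F0 /\ F2 < 0).
    by move=> [h1 h2]; rewrite -f0E -f2E in h1 h2; exact: (side_aux reg QS Dbk Dbk2 h1 h2).
  have side2 : ~ (0 < F2 /\ F0 < 0).
    by move=> [h1 h2]; rewrite -f0E -f2E in h1 h2; exact: (side_aux reg QS Dbk2 Dbk h1 h2).
  have eps0 : eps != 0 by case: epsc => ->; rewrite ?oppr_eq0 oner_eq0.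
  have F00 : F0 != 0 by rewrite /F0 mulf_neq0 // oppr_eq0 mulf_neq0 // gt_eqF.
  have F20 : F2 != 0 by rewrite /F2 mulf_neq0 // subr_eq0.
  have P0 : 0 < F0 * F2.
    case: (ltrgt0P F0) => h0; last by rewrite h0 eqxx in F00.
    - have : 0 <= F2 by rewrite leNgt; apply/negP => h; apply: side1.
      rewrite le_eqVlt eq_sym (negbTE F20) /= => h; exact: mulr_gt0.
    - have : F2 <= 0 by rewrite leNgt; apply/negP => h; apply: side2.
      rewrite le_eqVlt (negbTE F20) /= => h; by rewrite nmulr_lgt0.
  have : F0 * F2 = - tV * (eps * gamma * u * (u - u2)) by rewrite /F0 /F2; ring.
  by move=> e; rewrite e mulNr oppr_gt0 (pmulr_rlt0 _ tV0) in P0.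
have K : eps * gamma * u2 = - (eps * beta).
  have -> : eps * gamma * u2 = eps * (u2 * gamma) by ring.
  have -> : u2 * gamma = - beta by lra.
  ring.
have KS : 0 < eps * gamma * u2 * (sk * sk1).
  rewrite K.
  have -> : - (eps * beta) * (sk * sk1) = (- (eps * sk)) * (sk1 * beta) by ring.
  by rewrite mulr_gt0 // oppr_gt0.
case: ifP => h; rewrite hDk hDk1 in h.
- have hs := sgn_eq sk0 sk10 h.
  have Kp : 0 < eps * gamma * u2 by rewrite (pmulr_lgt0 _ hs) in KS.
  exists u2; split; first by split => //; exact: PS.
  move=> Q' u' hQ; case: (claim _ _ hQ) => [->|h']; first by left.
  by right; exact: last_case Kp h'.
- have hs := sgn_neq sk0 sk10 h.
  have Kn : eps * gamma * u2 < 0 by rewrite (nmulr_lgt0 _ hs) in KS.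
  exists u2; split; first by split => //; exact: PS.
  move=> Q' u' hQ; case: (claim _ _ hQ) => [->|h']; first by left.
  by right; exact: first_case Kn h'.
Qed.
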